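(* Let $R$ be a ring with unity and involution $*$, and let $a\in R$. The following statements are equivalent. (1) $a$ is left dual core invertible. (2) $a$ is left dual $(a,a)$-core invertible. (3) $a$ is left dual $(a,1)$-core invertible. (4) $1$ is left dual $(a,a)$-core invertible. (5) $a$ is left dual $a$-core invertible. (6) $a$ is left dual $1$-core invertible. (7) $a$ is left $(a^*,a)$-invertible.
   Context: An element $a$ is left dual core invertible if there exists $x\in R$ with $axa=a$, $(xa)^*=xa$ and $x^2a=x$. For $u,b,c\in R$, $u$ is left dual $(b,c)$-core invertible if there exists $x\in Rc$ with $bxub=b$ and $(xub)^*=xub$. For $v\in R$, $a$ is left dual $v$-core invertible if there exists $x\in R$ with $axva=a$, $(xva)^*=xva$ and $x^2va=x$. For $u,b,c\in R$, $u$ is left $(b,c)$-invertible if $b\in Rcub$. *)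

(* Defs.v *)
From mathcomp Require Import all_boot all_algebra.
Set Implicit Arguments. Unset Strict Implicit. Unset Printing Implicit Defensive.
Import GRing.Theory.
Local Open Scope ring_scope.

Definition involution (R : pzRingType) (star : R -> R) : Prop :=
  [/\ forall x, star (star x) = x,
      forall x y, star (x + y) = star x + star y
    & forall x y, star (x * y) = star y * star x].

Definition left_dual_core_inv (R : pzRingType) (star : R -> R) (a : R) : Prop :=
  exists x : R, [/\ a * x * a = a, star (x * a) = x * a & x ^+ 2 * a = x].

Definition left_dual_bc_core_inv (R : pzRingType) (star : R -> R) (b c u : R) : Prop :=
  exists x : R, [/\ exists r : R, x = r * c,
                    b * x * u * b = b & star (x * u * b) = x * u * b].

Definition left_dual_v_core_inv (R : pzRingType) (star : R -> R) (v a : R) : Prop :=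
  exists x : R, [/\ a * x * v * a = a, star (x * v * a) = x * v * a
                  & x ^+ 2 * v * a = x].

Definition left_bc_inv (R : pzRingType) (b c u : R) : Prop :=
  exists r : R, b = r * c * u * b.

(* Main.v *)
Require Import Defs.
From mathcomp Require Import all_boot all_algebra.
Local Open Scope ring_scope.
Import GRing.Theory.

Lemma to5 (R : pzRingType) (star : R -> R) (a x : R) :
  a * x * a = a -> star (x * a) = x * a -> x * x * a = x ->
  left_dual_v_core_inv star a a.
Proof.
move=> h1 h2 h3; exists (x * x); split.
- by rewrite !mulrA -(mulrA a x x) -(mulrA a (x*x) a) h3 h1.
- by rewrite h3.
- by rewrite expr2 !mulrA -(mulrA (x*x) x x) -(mulrA (x*x) (x*x) a) h3 -(mulrA x x x) -(mulrA x (x*x) a) h3.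
Qed.

Theorem corollary3p6 (R : pzRingType) (star : R -> R) (a : R) :
  involution star ->
  [<-> left_dual_core_inv star a;
       left_dual_bc_core_inv star a a a;
       left_dual_bc_core_inv star a 1 a;
       left_dual_bc_core_inv star a a 1;
       left_dual_v_core_inv star a a;
       left_dual_v_core_inv star 1 a;
       left_bc_inv (star a) a a].
Proof.
move=> [starK starD starM].
rewrite /left_dual_core_inv /left_dual_bc_core_inv /left_bc_inv.
tfae.
- move=> [x [h1 h2]]; rewrite expr2 => h3; exists (x ^+ 2); rewrite expr2; split.
  + by exists (x * x * x); rewrite -(mulrA x x x) -(mulrA x (x*x) a) h3.
  + by rewrite !mulrA -(mulrA a x x) -(mulrA a (x*x) a) h3 h1.
  + by rewrite h3.
- by move=> [x [_ h1 h2]]; exists x; split => //; exists x; rewrite mulr1.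
- move=> [x [_ h1 h2]]; exists (x * a); split.
  + by exists x.
  + by rewrite mulr1 mulrA.
  + by rewrite mulr1.
- move=> [x [[r ->] h1 h2]]; rewrite !mulr1 in h1 h2.
  apply: (@to5 R star a (r * a) h1 h2).
  by rewrite -(mulrA r a (r*a)) -(mulrA r (a*(r*a)) a) h1.
- rewrite /left_dual_v_core_inv.
  move=> [y [h1 h2 h3]]; exists (y * a); rewrite !mulr1; split.
  + by rewrite !mulrA h1.
  + by [].
  + by rewrite expr2 !mulrA -(mulrA y a y) -(mulrA y (a*y) a) -(mulrA y (a*y*a) a) h1.
- rewrite /left_dual_v_core_inv.
  move=> [x [h1 h2]]; rewrite !mulr1 in h1 h2 *; rewrite expr2 => h3.
  have e : star a = x * a * star a by rewrite -{1}h1 -(mulrA a x a) starM h2.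
  exists (x * x); rewrite {1}e -{1}h3 //.
- move=> [r h].
  have e1 : a = a * star a * star (r * a).
    by rewrite -{1}(starK a) {1}h (starM (r*a*a)) starK (starM (r*a) a) mulrA.
  have e2 : r * a * a = star a * star (r * a).
    transitivity (r * a * (a * star a * star (r * a))); first by rewrite -e1.
    by rewrite !mulrA -h.
  have ha : a * (r * a * a) = a by rewrite e2 mulrA -e1.
  exists (r * a); split.
  + by rewrite -mulrA ha.
  + by rewrite e2 starM !starK.
  + by rewrite expr2 -(mulrA (r*a) (r*a) a) -(mulrA r a (r*a*a)) ha.
Qed.
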